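(* Let $n\ge 3$ be odd and let $f=f_n$. If $x$ is an $n$-bit string of odd weight and $\overline{x}$ denotes its one's complement (the string obtained by flipping every bit of $x$), then $$f_n(\overline{x}) = f_n(x) + 2^{n-1}.$$
   Context: An $n$-bit string is $x=x_1x_2\cdots x_n$ with each $x_i\in\{0,1\}$; its (Hamming) weight is the number of $1$s. For distinct $n$-bit strings, $x<y$ in lexicographic order if there is $k$ with $x_j=y_j$ for all $j<k$ and $x_k<y_k$. Let $S_n^i$ be the sequence of all $n$-bit strings of weight $i$ listed in increasing lexicographic order, and $R_n^i$ the same strings listed in the reverse order (decreasing lexicographic order). Define the sequence $S_n$ as the concatenation $S_n=(R_n^1,R_n^3,R_n^5,\dots,R_n^{n-1},S_n^n,S_n^{n-2},\dots,S_n^4,S_n^2,S_n^0)$ if $n$ is even, and $S_n=(R_n^1,R_n^3,\dots,R_n^{n-2},R_n^n,S_n^{n-1},\dots,S_n^4,S_n^2,S_n^0)$ if $n$ is odd. Every $n$-bit string occurs exactly once in $S_n$; let $f_n$ be the bijection from $n$-bit strings to $\{1,\dots,2^n\}$ sending the string in position $j$ of $S_n$ to $j$. *)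

(* Defs.v *)
From mathcomp Require Import all_boot.
Set Implicit Arguments. Unset Strict Implicit. Unset Printing Implicit Defensive.

Fixpoint all_strings (n : nat) : seq (seq bool) :=
  if n is m.+1 then [seq false :: x | x <- all_strings m] ++
                    [seq true :: x | x <- all_strings m]
  else [:: [::]].

Definition weight (x : seq bool) : nat := count id x.

Fixpoint lexlt (x y : seq bool) : bool :=
  match x, y with
  | a :: x', b :: y' => (~~ a && b) || ((a == b) && lexlt x' y')
  | _, _ => false
  end.
Definition lexle (x y : seq bool) : bool := (x == y) || lexlt x y.

Definition Sni (n i : nat) : seq (seq bool) :=
  sort lexle [seq x <- all_strings n | weight x == i].
Definition Rni (n i : nat) : seq (seq bool) := rev (Sni n i).

Definition Sn (n : nat) : seq (seq bool) :=
  flatten [seq Rni n i | i <- [seq i <- iota 0 n.+1 | odd i]] ++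
  flatten [seq Sni n i | i <- rev [seq i <- iota 0 n.+1 | ~~ odd i]].

(* f_n x = position (1-based) of x in S_n *)
Definition fn (n : nat) (x : seq bool) : nat := (index x (Sn n)).+1.

Definition compl (x : seq bool) : seq bool := map negb x.

(* Main.v *)
Require Import Defs.
From mathcomp Require Import all_boot zify.

Lemma lexlt_trans x y z : lexlt x y -> lexlt y z -> lexlt x z.
Proof.
elim: x y z => [|a x IH] [|b y] [|c z] //=.
case: a; case: b; case: c => //=; try apply: IH.
Qed.

Arguments lexlt_trans {x y z}.
Lemma lexlt_irr x : lexlt x x = false.
Proof. by elim: x => [|a x IH] //=; rewrite eqxx IH andbF; case: a. Qed.

Lemma lexle_trans : transitive lexle.
Proof.
move=> y x z; rewrite /lexle => /orP[/eqP->//|h1] /orP[/eqP<-|h2].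
  by rewrite h1 orbT.
by rewrite (lexlt_trans h1 h2) orbT.
Qed.

Lemma lexle_anti : antisymmetric lexle.
Proof.
move=> x y; rewrite /lexle => /andP[/orP[/eqP->//|h1] /orP[/eqP->//|h2]].
by have := lexlt_trans h1 h2; rewrite lexlt_irr.
Qed.

Lemma lexle_total_size x y : size x = size y -> lexle x y || lexle y x.
Proof.
rewrite /lexle.
elim: x y => [|a x IH] [|b y] //= [] /IH.
rewrite !eqseq_cons.
case: a; case: b => //=; rewrite ?orbT //.
Qed.

Lemma lexlt_compl x y : lexlt (compl x) (compl y) = lexlt y x.
Proof.
elim: x y => [|a x IH] [|b y] //=.
by rewrite IH; case: a; case: b.
Qed.

Lemma compl_inj : injective compl.
Proof. apply: inj_map; exact: negb_inj. Qed.

Lemma lexle_compl x y : lexle (compl x) (compl y) = lexle y x.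
Proof.
by rewrite /lexle lexlt_compl (inj_eq compl_inj) eq_sym.
Qed.

Lemma size_all_strings n : size (all_strings n) = 2 ^ n.
Proof.
elim: n => [|n IH] //=; rewrite size_cat !size_map IH expnS; lia.
Qed.

Lemma mem_all_strings n x : (x \in all_strings n) = (size x == n).
Proof.
elim: n x => [|n IH] [|a x] //=; rewrite mem_cat.
- by apply/orP => -[] /mapP[y _].
- rewrite eqSS -IH; case: a.
    have inj : injective (cons true) by move=> u v [].
    rewrite (mem_map inj).
    by apply/orP/idP => [[/mapP[y _]//|//]|]; right.
  have inj : injective (cons false) by move=> u v [].
  rewrite (mem_map inj).
  by apply/orP/idP => [[//|/mapP[y _]//]|]; left.
Qed.

Lemma uniq_all_strings n : uniq (all_strings n).
Proof.
elim: n => [|n IH] //=; rewrite cat_uniq !map_inj_uniq //; try by move=> u v [].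
rewrite IH andbT /=; apply/hasPn => y /mapP[u _ ->]; apply/negP => /mapP[v _] //.
Qed.

Lemma weight_compl x : weight (compl x) = size x - weight x.
Proof.
rewrite /weight /compl count_map.
have := count_predC id x; rewrite /predC.
move=> <-; rewrite addKn; apply: eq_count => b; by case: b.
Qed.

Lemma weight_le x : weight x <= size x.
Proof. exact: count_size. Qed.



Lemma complK : involutive compl.
Proof. by move=> x; rewrite /compl -map_comp map_id_in // => b _ /=; rewrite negbK. Qed.

Lemma Sni_sorted n i : sorted lexle (Sni n i).
Proof.
apply: (sort_sorted_in (P := [pred x | size x == n])).
  by move=> x y /eqP hx /eqP hy; apply: lexle_total_size; rewrite hx hy.
by apply/allP => y; rewrite mem_filter mem_all_strings; case/andP.
Qed.

Lemma Sni_compl n i : i <= n -> Sni n (n - i) = rev (map compl (Sni n i)).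
Proof.
move=> hi.
apply: (sorted_eq lexle_trans lexle_anti).
- exact: Sni_sorted.
- rewrite rev_sorted sorted_map.
  apply: (sub_sorted _ (Sni_sorted n i)) => a b; by rewrite /relpre /= lexle_compl.
rewrite perm_sym perm_rev perm_sym /Sni perm_sort.
apply: uniq_perm.
- by rewrite filter_uniq // uniq_all_strings.
- by rewrite (map_inj_uniq compl_inj) sort_uniq filter_uniq // uniq_all_strings.
move=> y; rewrite -{2}(complK y) (mem_map compl_inj) mem_sort !mem_filter
   !mem_all_strings weight_compl /compl size_map -/(compl y).
have := weight_le y.
case: (eqVneq (size y) n) => [->|]; rewrite ?andbF ?andbT // => hw.
apply/eqP/eqP; lia.
Qed.

Lemma rev_iota0 m : rev (iota 0 m) = map (fun i => m - i.+1) (iota 0 m).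
Proof.
elim: m => [|m IH] //.
transitivity (m :: [seq m - i.+1 | i <- iota 0 m]).
  by rewrite -addn1 iotaD rev_cat IH.
have h1 : iota 1 m = map (addn 1) (iota 0 m) by exact: (iotaDl 1 0 m).
rewrite /= h1 -map_comp subn1 /=; by congr (_ :: _).
Qed.

Lemma evens n : odd n ->
  rev [seq i <- iota 0 n.+1 | ~~ odd i] = map (fun i => n - i) [seq i <- iota 0 n.+1 | odd i].
Proof.
move=> hn; rewrite -filter_rev rev_iota0.
have -> : [seq n.+1 - i.+1 | i <- iota 0 n.+1] = [seq n - i | i <- iota 0 n.+1].
  by apply: eq_map => i; rewrite subSS.
rewrite filter_map; congr map; apply: eq_in_filter => i.
rewrite mem_iota add0n /= => hi; rewrite oddB // hn /=; by case: (odd i).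
Qed.

Lemma count_sum (f : seq bool -> nat) s l : uniq l ->
  sumn [seq count (fun x => f x == i) s | i <- l] = count (fun x => f x \in l) s.
Proof.
elim: l => [|a l IH] /=; first by rewrite count_pred0.
case/andP => hal hl; rewrite IH //.
have := count_predUI (fun x => f x == a) (fun x => f x \in l) s.
have -> : count (predI (fun x => f x == a) (fun x => f x \in l)) s = 0.
  apply/eqP; rewrite -leqn0 leqNgt -has_count; apply/hasPn => x _ /=.
  by apply/negP => /andP[/eqP -> ]; apply/negP.
rewrite addn0 => <-; apply: eq_count => x /=; by rewrite in_cons.
Qed.

Lemma count_odd n : count (fun x => odd (weight x)) (all_strings n.+1) = 2 ^ n.
Proof.
rewrite /= count_cat !count_map -size_all_strings -(count_predC (fun x => odd (weight x))).
congr (_ + _); apply: eq_count => x //=.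
Qed.

Theorem mainTheorem1 (n : nat) (x : seq bool) :
  3 <= n -> odd n -> size x = n -> odd (weight x) ->
  fn n (compl x) = fn n x + 2 ^ n.-1.
Proof.
move=> h3 hn hx hw.
set O := [seq i <- iota 0 n.+1 | odd i].
set A := flatten [seq Rni n i | i <- O].
have hB : flatten [seq Sni n i | i <- rev [seq i <- iota 0 n.+1 | ~~ odd i]] = map compl A.
  rewrite evens // -map_comp /A map_flatten -map_comp; congr flatten.
  apply/eq_in_map => i; rewrite mem_filter mem_iota add0n /= => /andP[_ hi].
  by rewrite Sni_compl // /Rni map_rev.
have xA : x \in A.
  apply/flatten_mapP; exists (weight x).
    by rewrite mem_filter mem_iota add0n hw /= ltnS -hx weight_le.
  by rewrite mem_rev mem_sort mem_filter eqxx mem_all_strings hx /=.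
have cA : compl x \notin A.
  apply/negP => /flatten_mapP[i]; rewrite mem_filter => /andP[oi _].
  rewrite mem_rev mem_sort mem_filter => /andP[/eqP hw' _].
  move: oi; rewrite -hw' weight_compl oddB ?weight_le // hw hx hn.
  by [].
have sA : size A = 2 ^ n.-1.
  rewrite /A size_flatten /shape -map_comp.
  have -> : [seq (size \o Rni n) i | i <- O] =
            [seq count (fun y => weight y == i) (all_strings n) | i <- O].
    by apply: eq_map => i /=; rewrite size_rev size_sort size_filter.
  rewrite count_sum; last by rewrite filter_uniq // iota_uniq.
  have -> : count (fun y => weight y \in O) (all_strings n) =
            count (fun y => odd (weight y)) (all_strings n).
    apply: eq_in_count => y; rewrite mem_all_strings => /eqP hy.
    rewrite mem_filter mem_iota add0n ltnS -hy weight_le; by case: (odd _).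
  by case: n h3 {hn hx hB xA cA O A} => [|m] // _; rewrite count_odd.
rewrite /fn /Sn hB !index_cat xA (negbTE cA) (index_map compl_inj) sA.
by rewrite addnC addSn.
Qed.
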